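(* Let $\mathbf{A}$ be the constraint matrix of the relaxed nonbinary LDPC decoding problem constructed in the context. Then every entry of $\mathbf{A}$ belongs to $\{0,1,-1\}$.
   Context: Fix $q\ge1$; identify $\mathbb{F}_{2^q}$ with $\{0,\dots,2^q-1\}$ via binary expansion $\alpha=\sum_{i=1}^q c_i2^{i-1}$. A nonbinary code has parity-check matrix $\mathbf{H}\in\mathbb{F}_{2^q}^{m\times n}$ whose $j$th row has $d_j\ge3$ nonzero entries, at positions $\sigma_1,\dots,\sigma_{d_j}$ with coefficients $h_{\sigma_1},\dots,h_{\sigma_{d_j}}$. Each row is decomposed into $d_j-2$ three-variable checks using $d_j-3$ auxiliary symbols $g_1,\dots,g_{d_j-3}$: the first check involves $(u_{\sigma_1},h_{\sigma_1}),(u_{\sigma_2},h_{\sigma_2}),(g_1,1)$; for $t=2,\dots,d_j-3$ a check involves $(g_{t-1},1),(u_{\sigma_{t+1}},h_{\sigma_{t+1}}),(g_t,1)$; the last check involves $(g_{d_j-3},1),(u_{\sigma_{d_j-1}},h_{\sigma_{d_j-1}}),(u_{\sigma_{d_j}},h_{\sigma_{d_j}})$ (if $d_j=3$ there is a single check on the three code symbols). Altogether there are $\Gamma_c=\sum_j(d_j-2)$ three-variable checks and $\Gamma_a=\sum_j(d_j-3)$ auxiliary symbols, so $n+\Gamma_a$ symbols. For check $\tau$ let $h_{\tau,1},h_{\tau,2},h_{\tau,3}$ be its coefficients and $\mathbf{Q}_\tau\in\{0,1\}^{3\times(n+\Gamma_a)}$ the matrix whose $k$th row has a single $1$ at the index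 of its $k$th symbol. Let $\mathbf{D}(2^q,h)$ be the $(2^q-1)\times(2^q-1)$ matrix with $D_{ij}=1$ iff $i=j\cdot h$ in $\mathbb{F}_{2^q}$, and $\mathbf{D}_\tau=\mathrm{diag}(\mathbf{D}(2^q,h_{\tau,1}),\mathbf{D}(2^q,h_{\tau,2}),\mathbf{D}(2^q,h_{\tau,3}))$. Let $\mathbf{B}\in\{0,1\}^{q\times(2^q-1)}$ have $B_{i\alpha}$ equal to the $i$th binary digit (weight $2^{i-1}$) of $\alpha$. For $\ell=1,\dots,2^q-1$ let $\boldsymbol\beta_\ell\in\{0,1\}^{2^q-1}$, $(\boldsymbol\beta_\ell)_\alpha=\big(\sum_{i=1}^qB_{i\ell}B_{i\alpha}\big)\bmod 2$. Let $\mathbf{P}=\begin{bmatrix}1&-1&-1\\-1&1&-1\\-1&-1&1\\1&1&1\end{bmatrix}$. Set $\hat{\mathbf{W}}_\tau=[\mathbf{P}\,\mathrm{diag}(\boldsymbol\beta_1^T,\boldsymbol\beta_1^T,\boldsymbol\beta_1^T)\mathbf{D}_\tau;\dots;\mathbf{P}\,\mathrm{diag}(\boldsymbol\beta_{2^q-1}^T,\boldsymbol\beta_{2^q-1}^T,\boldsymbol\beta_{2^q-1}^T)\mathbf{D}_\tau]$, $\mathbf{S}=\mathbf{I}_{n+\Gamma_a}\otimes\mathbf{1}_{2^q-1}^T$, and $\mathbf{A}=[\hat{\mathbf{W}}_1(\mathbf{Q}_1\otimes\mathbf{I}_{2^q-1});\dots;\hat{\mathbf{W}}_{\Gamma_c}(\mathbf{Q}_{\Gamma_c}\otimes\mathbf{I}_{2^q-1});\mathbf{S}]$,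 where semicolons denote vertical stacking. *)

(* Defs.v *)
From HB Require Import structures.
From mathcomp Require Import all_boot all_order all_algebra all_field.
Set Implicit Arguments. Unset Strict Implicit. Unset Printing Implicit Defensive.
Import Order.TTheory GRing.Theory Num.Theory.
Local Open Scope ring_scope.

(* An index i : 'I_(k * r) is read as
   the pair (i %/ r, i %% r) (block-major order), the usual convention for
   Kronecker products and vertical stacking of k blocks of height r.      *)

Lemma blk_lt (k r : nat) (i : 'I_(k * r)) : (i %/ r < k)%N.
Proof.
case: r i => [|r] i; first by case: i => i; rewrite muln0.
by rewrite ltn_divLR // mulnC.
Qed.

Lemma off_lt (k r : nat) (i : 'I_(k * r)) : (i %% r < r)%N.
Proof.
case: r i => [|r] i; first by case: i => i; rewrite muln0.
by rewrite ltn_pmod.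
Qed.

Definition blk (k r : nat) (i : 'I_(k * r)) : 'I_k := Ordinal (blk_lt i).
Definition off (k r : nat) (i : 'I_(k * r)) : 'I_r := Ordinal (off_lt i).

Definition kronmx (R : pzRingType) (m1 n1 m2 n2 : nat)
  (A : 'M[R]_(m1, n1)) (B : 'M[R]_(m2, n2)) : 'M[R]_(m1 * m2, n1 * n2) :=
  \matrix_(i, j) (A (blk i) (blk j) * B (off i) (off j)).

Definition stackmx (R : Type) (k r c : nat) (X : 'I_k -> 'M[R]_(r, c))
  : 'M[R]_(k * r, c) :=
  \matrix_(i, j) X (blk i) (off i) j.

Definition bdiagmx (R : pzRingType) (k a b : nat) (X : 'I_k -> 'M[R]_(a, b))
  : 'M[R]_(k * a, k * b) :=
  \matrix_(i, j) (if blk i == blk j then X (blk i) (off i) (off j) else 0).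

(* The field F_(2^q) and its identification with {0, ..., 2^q - 1}.
   Given an F_2-basis b_1..b_q of F (here b : 'I_q -> F), the integer
   alpha = sum_i c_i 2^(i-1) is identified with sum_i c_i b_i.          *)

(* i-th binary digit (weight 2^i, 0-indexed) of a natural number *)
Definition bitn (i a : nat) : bool := odd (a %/ 2 ^ i).

Definition fel (F : finFieldType) (q : nat) (b : 'I_q -> F) (a : nat) : F :=
  \sum_(i < q) (bitn i a)%:R * b i.

Definition fel_ord (F : finFieldType) (q : nat) (b : 'I_q -> F)
  (a : 'I_(2 ^ q)) : F := fel b a.

(* Nonzero elements 1..2^q-1 are indexed by 'I_(2^q - 1), index k <-> k+1. *)
Notation Nq q := (2 ^ q - 1)%N.

Definition Dmat (F : finFieldType) (q : nat) (b : 'I_q -> F) (h : F)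
  : 'M[int]_(Nq q) :=
  \matrix_(i, j) ((fel b i.+1 == fel b j.+1 * h) : int).

Definition Bmat (q : nat) : 'M[int]_(q, Nq q) :=
  \matrix_(i, a) (bitn i a.+1 : int).

(* beta_l, l = k+1 for k : 'I_(2^q - 1), as a column vector. *)
Definition betav (q : nat) (l : 'I_(Nq q)) : 'cV[int]_(Nq q) :=
  \col_a ((\sum_(i < q) Bmat q i l * Bmat q i a) %% 2)%Z.

Definition Pmat : 'M[int]_(4, 3 * 1) :=
  \matrix_(i < 4, j < 3 * 1)
    (if i == 3 :> nat then 1 else if i == j :> nat then 1 else -1).

Section Code.
Variables (F : finFieldType) (m n : nat) (H : 'M[F]_(m, n)).

Definition supp (j : 'I_m) : seq 'I_n := [seq k <- enum 'I_n | H j k != 0].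
Definition deg (j : 'I_m) : nat := size (supp j).

Definition Gamma_c : nat := (\sum_(j < m) (deg j - 2))%N.
Definition Gamma_a : nat := (\sum_(j < m) (deg j - 3))%N.

(* A symbol is a natural index: code symbols u_1..u_n are 0..n-1, and
   the auxiliary symbols g_1..g_{d_j - 3} of row j are
   n + off_j + 0, ..., n + off_j + (d_j - 4), off_j = sum_{j' < j} (d_j' - 3). *)
Definition aux_off (j : 'I_m) : nat := (\sum_(j' < m | j' < j) (deg j' - 3))%N.

(* sigma_k (1-indexed, as a symbol index) and its coefficient h_{sigma_k} *)
Definition sig (j : 'I_m) (k : nat) : nat :=
  nth 0%N [seq val s | s <- supp j] k.-1.
Definition hsig (j : 'I_m) (k : nat) : F :=
  nth 0 [seq H j s | s <- supp j] k.-1.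

Definition gaux (j : 'I_m) (t : nat) : nat := (n + aux_off j + t.-1)%N.

(* a three-variable check: its three (symbol, coefficient) pairs *)
Definition check3 := ((nat * F) * (nat * F) * (nat * F))%type.

Definition row_checks (j : 'I_m) : seq check3 :=
  let d := deg j in
  if d == 3 then
    [:: ((sig j 1, hsig j 1), (sig j 2, hsig j 2), (sig j 3, hsig j 3))]
  else
    ((sig j 1, hsig j 1), (sig j 2, hsig j 2), (gaux j 1, 1))
    :: [seq ((gaux j t.-1, 1), (sig j t.+1, hsig j t.+1), (gaux j t, 1))
         | t <- iota 2 (d - 4)]
    ++ [:: ((gaux j (d - 3), 1), (sig j d.-1, hsig j d.-1), (sig j d, hsig j d))].

Definition all_checks : seq check3 := flatten [seq row_checks j | j <- enum 'I_m].

Definition dflt_check : check3 := ((0%N, 0), (0%N, 0), (0%N, 0)).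

Definition chk (tau : 'I_Gamma_c) : check3 := nth dflt_check all_checks tau.

Definition chk_entry (tau : 'I_Gamma_c) (k : 'I_3) : nat * F :=
  let: (x1, x2, x3) := chk tau in
  if k == 0 :> nat then x1 else if k == 1 :> nat then x2 else x3.

Definition Nsym : nat := (n + Gamma_a)%N.

Definition Qmat (tau : 'I_Gamma_c) : 'M[int]_(3, Nsym) :=
  \matrix_(k, x) ((val x == (chk_entry tau k).1) : int).

Variables (q : nat) (b : 'I_q -> F).

Definition Dtau (tau : 'I_Gamma_c) : 'M[int]_(3 * Nq q) :=
  bdiagmx (fun k : 'I_3 => Dmat b (chk_entry tau k).2).

Definition Wtau (tau : 'I_Gamma_c) : 'M[int]_(Nq q * 4, 3 * Nq q) :=
  stackmx (fun l : 'I_(Nq q) =>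
    Pmat *m bdiagmx (fun _ : 'I_3 => (betav l)^T) *m Dtau tau).

Definition Smat : 'M[int]_(Nsym * 1, Nsym * Nq q) :=
  kronmx (1%:M : 'M[int]_Nsym) (const_mx 1 : 'rV[int]_(Nq q)).

Definition Amat : 'M[int]_(Gamma_c * (Nq q * 4) + Nsym * 1, Nsym * Nq q) :=
  col_mx
    (stackmx (fun tau : 'I_Gamma_c =>
       Wtau tau *m kronmx (Qmat tau) (1%:M : 'M[int]_(Nq q))))
    Smat.

End Code.

(* Main.v *)
Require Import Defs.
From HB Require Import structures.
From mathcomp Require Import all_boot all_order all_algebra all_field.
From mathcomp Require Import zify.
Import GRing.Theory.
Set Implicit Arguments. Unset Strict Implicit.
Local Open Scope ring_scope.

Definition dist3 (F : Type) (c : ((nat * F) * (nat * F) * (nat * F))%type) : bool :=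
  let: ((a, _), (b, _), (c, _)) := c in [&& a != b, a != c & b != c].

Lemma sig_lt (F : finFieldType) m n (H : 'M[F]_(m, n)) j k :
  (k.-1 < deg H j)%N -> (sig H j k < n)%N.
Proof.
move=> hk; rewrite /sig.
have : nth 0%N [seq val s | s <- supp H j] k.-1 \in [seq val s | s <- supp H j].
  by apply: mem_nth; rewrite size_map.
by case/mapP=> x _ ->; case: x.
Qed.

Lemma sig_inj (F : finFieldType) m n (H : 'M[F]_(m, n)) j k k' :
  (k.-1 < deg H j)%N -> (k'.-1 < deg H j)%N -> sig H j k = sig H j k' -> k.-1 = k'.-1.
Proof.
move=> hk hk' e; apply/eqP; rewrite -(nth_uniq 0%N (s := [seq val s | s <- supp H j])) ?size_map //.
  by rewrite -/(sig H j k) -/(sig H j k') e.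
rewrite map_inj_uniq; last exact: val_inj.
by rewrite /supp filter_uniq // enum_uniq.
Qed.

Lemma row_dist (F : finFieldType) m n (H : 'M[F]_(m, n)) j :
  (3 <= deg H j)%N -> all (@dist3 F) (row_checks H j).
Proof.
move=> hd; rewrite /row_checks.
have sl k : (k.-1 < deg H j)%N -> (sig H j k < n)%N by apply: sig_lt.
have sn k k' : (k.-1 < deg H j)%N -> (k'.-1 < deg H j)%N -> k.-1 != k'.-1 -> sig H j k != sig H j k'.
  move=> h1 h2 h3; apply/eqP=> e; move/eqP: h3; apply; exact: sig_inj e.
have gn t : (n <= gaux H j t)%N by rewrite /gaux; lia.
have sg k t : (k.-1 < deg H j)%N -> sig H j k != gaux H j t.
  move=> h; have := sl _ h; have := gn t; lia.
case: eqP => [d3|d3].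
  rewrite /= !sn ?d3 //.
have gs k t : (k.-1 < deg H j)%N -> gaux H j t != sig H j k.
  by move=> h; rewrite eq_sym sg.
rewrite /= all_cat /=; apply/and3P; split.
- by rewrite sn ?sg //=; lia.
- apply/allP=> c /mapP[t]; rewrite mem_iota => ht ->.
  by rewrite /= sg ?gs /=; rewrite /gaux; lia.
- by rewrite sn ?gs //=; lia.
Qed.

Lemma size_row (F : finFieldType) m n (H : 'M[F]_(m, n)) j :
  (3 <= deg H j)%N -> size (row_checks H j) = (deg H j - 2)%N.
Proof.
move=> hd; rewrite /row_checks; case: eqP => [->//|d3].
rewrite /= size_cat size_map size_iota /=; lia.
Qed.

Lemma chk_dist (F : finFieldType) m n (H : 'M[F]_(m, n)) :
  (forall j, 3 <= deg H j)%N -> forall tau : 'I_(Gamma_c H), dist3 (chk tau).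
Proof.
move=> hd tau.
have hs : size (all_checks H) = Gamma_c H.
  rewrite size_flatten /shape -map_comp sumnE big_map big_enum /=.
  by apply: eq_bigr => j _; rewrite /= size_row.
have : chk tau \in all_checks H by apply: mem_nth; rewrite hs.
case/flattenP=> s /mapP[j _ ->].
exact: (allP (row_dist (hd j))).
Qed.

Lemma chk_inj (F : finFieldType) m n (H : 'M[F]_(m, n)) :
  (forall j, 3 <= deg H j)%N -> forall (tau : 'I_(Gamma_c H)) (k k' : 'I_3),
  (chk_entry tau k).1 = (chk_entry tau k').1 -> k = k'.
Proof.
move=> hd tau k k'; have := chk_dist hd tau; rewrite /chk_entry.
case: (chk tau) => [[[a x] [b y]] [c z]] /= /and3P[ab ac bc].
case: k => [[|[|[|k]]] hk] //; case: k' => [[|[|[|k']]] hk'] //= e;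
  try by apply: val_inj.
all: move: ab ac bc; rewrite e eqxx //.
Qed.

Notation S3 := ([:: 0; 1; -1] : seq int).

Lemma S_mul (a c : int) : a \in S3 -> c \in S3 -> a * c \in S3.
Proof.
rewrite !inE => ha hc; case/or3P: ha => /eqP->; case/or3P: hc => /eqP-> //.
Qed.

Lemma S_bool (c : bool) : (c : int) \in S3.
Proof. by case: c. Qed.

Lemma bool_nz (c : bool) : ((c : int) != 0) = c.
Proof. by case: c. Qed.

Lemma natr_bool_nz (c : bool) : ((c%:R : int) != 0) -> c.
Proof. by case: c. Qed.

Lemma sum_uniq (I : finType) (f : I -> int) :
  (forall x, f x \in S3) -> (forall x y, f x != 0 -> f y != 0 -> x = y) ->
  \sum_x f x \in S3.
Proof.
move=> hS hu; case: (pickP (fun x => f x != 0)) => [x fx|none].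
  rewrite (bigD1 x) //= big1 ?addr0 // => y yx.
  apply/eqP; apply: contraNT yx => fy; apply/eqP; exact: hu.
by rewrite big1 // => y _; apply/eqP; move: (none y) => /= /negbFE.
Qed.

Lemma blk_off_inj k r (y y' : 'I_(k * r)) : blk y = blk y' -> off y = off y' -> y = y'.
Proof.
move=> /(congr1 val) /= e1 /(congr1 val) /= e2; apply/val_inj.
by rewrite /= (divn_eq y r) (divn_eq y' r) e1 e2.
Qed.

Lemma fel_inj (F : finFieldType) q (b : 'I_q -> F) a a' :
  bijective (fel_ord b) -> (a < 2 ^ q)%N -> (a' < 2 ^ q)%N -> fel b a = fel b a' -> a = a'.
Proof.
move=> /bij_inj hb ha ha' e.
by have /(congr1 val) := hb (Ordinal ha) (Ordinal ha') e.
Qed.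

Lemma modz2_S (x : int) : (x %% 2)%Z \in S3.
Proof.
have h1 : (0 <= (x %% 2)%Z)%R by rewrite modz_ge0.
have h2 : ((x %% 2)%Z < 2)%R by rewrite ltz_pmod.
move: h1 h2; move: (x %% 2)%Z => y; rewrite !inE.
case: y => [[|[|y]]|y] //.
Qed.

Lemma Wtau_S (F : finFieldType) (q : nat) (b : 'I_q -> F)
  (m n : nat) (H : 'M[F]_(m, n)) tau r y :
  bijective (fel_ord b) -> Wtau (H:=H) b tau r y \in S3.
Proof.
move=> hb; rewrite /Wtau /stackmx mxE mxE.
apply: sum_uniq => [z|z z'].
  apply: S_mul.
    rewrite mxE; apply: sum_uniq => [k|k k'].
      apply: S_mul; first by rewrite mxE; case: ifP => _; [|case: ifP].
      rewrite mxE; case: ifP => _ //; rewrite !mxE; exact: modz2_S.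
    rewrite !mxE !mulf_eq0 !negb_or => /andP[_ h1] /andP[_ h2].
    move: h1 h2; case: ifP => [/eqP e1 _|_]; last by rewrite eqxx.
    case: ifP => [/eqP e2 _|_]; last by rewrite eqxx.
    apply: blk_off_inj; first by rewrite e1 e2.
    by rewrite [off k]ord1 [off k']ord1.
  rewrite mxE; case: ifP => _ //; rewrite mxE; exact: S_bool.
rewrite !mulf_eq0 !negb_or => /andP[_ h1] /andP[_ h2].
move: h1 h2; rewrite /Dtau !mxE.
case: ifP => [/eqP e1|_]; last by rewrite eqxx.
case: ifP => [/eqP e2|_]; last by rewrite eqxx.
rewrite !bool_nz => /eqP f1 /eqP f2.
rewrite e1 in f1; rewrite e2 in f2.
apply: blk_off_inj; first by rewrite e1 e2.
have lt (w : 'I_(Nq q)) : ((w : nat).+1 < 2 ^ q)%N.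
  have := ltn_ord w; have := expn_gt0 2 q; lia.
apply/val_inj => /=.
have := fel_inj hb (lt (off z)) (lt (off z')) (etrans f1 (esym f2)).
by case.
Qed.

Theorem fact1 (F : finFieldType) (q : nat) (b : 'I_q -> F)
  (m n : nat) (H : 'M[F]_(m, n)) :
  (1 <= q)%N ->
  bijective (fel_ord b) ->
  (forall j : 'I_m, (3 <= deg H j)%N) ->
  forall i j, Amat H b i j \in [:: 0; 1; -1].
Proof.
move=> hq hb hd i j.
rewrite /Amat -(splitK i); case: (split i) => k /=; [rewrite col_mxEu | rewrite col_mxEd].
  rewrite /stackmx mxE mxE.
  apply: sum_uniq => [y|y y'].
    apply: S_mul; first exact: Wtau_S.
    rewrite !mxE; apply: S_mul; first exact: S_bool.
    by case: (_ == _).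
  rewrite !mxE !mulf_eq0 !negb_or.
  move=> /and3P[_ q1 e1] /and3P[_ q2 e2].
  move: q1 q2; rewrite !bool_nz => /eqP q1 /eqP q2.
  move: e1 e2 => /natr_bool_nz/eqP e1 /natr_bool_nz/eqP e2.
  apply: blk_off_inj; last by rewrite e1 e2.
  apply: (chk_inj hd); exact: (etrans (esym q1) q2).
rewrite /Smat /kronmx !mxE mulr1; by case: (_ == _).
Qed.
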